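(* Let $(X,\|\cdot\|)$ be a normed linear space over $\mathbb{R}$ or $\mathbb{C}$, let $a\in X$ with $a\neq 0$, and let $x_1,\dots,x_n\in X$ satisfy $\|x_j-a\|\le\|a\|$ for each $j\in\{1,\dots,n\}$. Then for any $p_1,\dots,p_n\ge0$ with $\sum_{j=1}^n p_j=1$, $$\Big\|\sum_{j=1}^n p_jx_j\Big\|\,\|a\|+\frac12\sum_{j=1}^n p_j\|x_j\|\,\|x_j-a\|\ \ge\ \frac12\|a\|\sum_{j=1}^n p_j\|x_j\|.$$ *)

(* Defs.v *)
From HB Require Import structures.
From mathcomp Require Import all_boot all_order all_algebra.
From mathcomp Require Import all_classical all_reals all_analysis.

(* Main.v *)
Require Import Defs.
From HB Require Import structures.
From mathcomp Require Import all_boot all_order all_algebra.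
From mathcomp Require Import all_classical all_reals all_analysis.
From mathcomp Require Import ring.
Import Order.TTheory GRing.Theory Num.Theory.
Import numFieldNormedType.Exports.
Local Open Scope ring_scope.

Theorem proposition2p1 (K : numFieldType) (X : normedModType K) (n : nat)
  (a : X) (x : 'I_n -> X) (p : 'I_n -> K) :
  a != 0 ->
  (forall j, `|x j - a| <= `|a|) ->
  (forall j, 0 <= p j) ->
  \sum_(j < n) p j = 1 ->
  `|\sum_(j < n) p j *: x j| * `|a|
    + 2^-1 * \sum_(j < n) p j * `|x j| * `|x j - a|
  >= 2^-1 * `|a| * \sum_(j < n) p j * `|x j|.
Proof.
move=> _ Hr Hp Hs.
set A := `|a|.
have h1 : A - \sum_(j < n) p j * `|x j - a| <= `|\sum_(j < n) p j *: x j|.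
  have E : a = \sum_(j < n) p j *: x j - \sum_(j < n) p j *: (x j - a).
    rewrite -sumrB.
    under eq_bigr => j _ do rewrite scalerBr opprB addrCA subrr addr0.
    by rewrite -scaler_suml Hs scale1r.
  rewrite lerBlDr /A {1}E.
  apply: (le_trans (ler_normB _ _)); rewrite lerD2l.
  apply: (le_trans (ler_norm_sum _ _ _)).
  apply: ler_sum => j _; rewrite normrZ ger0_norm //.
have h2 : A * (A - \sum_(j < n) p j * `|x j - a|) <= `|\sum_(j < n) p j *: x j| * A.
  by rewrite mulrC; apply: ler_wpM2r => //; rewrite /A normr_ge0.
have E : A * (A - \sum_(j < n) p j * `|x j - a|)
    + 2^-1 * \sum_(j < n) p j * `|x j| * `|x j - a|
    - 2^-1 * A * \sum_(j < n) p j * `|x j|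
  = \sum_(j < n) p j * ((A - `|x j - a|) * (A - `|x j - a|) * 2^-1
        + 2^-1 * ((A + `|x j - a|) * (A - `|x j - a|) - `|x j| * (A - `|x j - a|))).
  clearbody A; transitivity (\sum_(j < n) (p j * (A * A) - A * (p j * `|x j - a|)
      + 2^-1 * (p j * `|x j| * `|x j - a|) - 2^-1 * A * (p j * `|x j|))).
    rewrite !big_split /= !sumrN -!mulr_sumr -mulr_suml Hs mul1r. by rewrite mulrBr.
  by apply: eq_bigr => j _; field.
have h4 : 2^-1 * A * \sum_(j < n) p j * `|x j| <=
    A * (A - \sum_(j < n) p j * `|x j - a|) + 2^-1 * \sum_(j < n) p j * `|x j| * `|x j - a|.
  rewrite -subr_ge0 E.
  apply: sumr_ge0 => j _; apply: mulr_ge0 => //.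
  have hA : 0 <= A - `|x j - a| by rewrite subr_ge0.
  apply: addr_ge0; first by apply: mulr_ge0; [apply: mulr_ge0|rewrite invr_ge0].
  apply: mulr_ge0; first by rewrite invr_ge0.
  rewrite subr_ge0; apply: ler_wpM2r => //.
  rewrite addrC /A; apply: (le_trans _ (ler_normD _ _)).
  by rewrite subrK.
apply: (le_trans h4); rewrite lerD2r; exact: h2.
Qed.
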